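(* Let $k$ be a field, $e,h \geq 1$ integers, $1 \leq i \leq e$, and $M$ a finite-dimensional $k[T]/T^e$-module generated by at most $h$ elements. Assume $N \subseteq M$ is a $k[T]$-submodule with $T^i N = 0$ and $T^{e-i} M \subseteq N$. Regard $N$ as a $k[T]/T^i$-module and $M/N$ as a $k[T]/T^{e-i}$-module. Then $\mathrm{Hdg}(M) \geq \mathrm{Hdg}(N) \star \mathrm{Hdg}(M/N)$, i.e. $\mathrm{Hdg}(M)(x) \geq \mathrm{Hdg}(N) \star \mathrm{Hdg}(M/N)(x)$ for all $0 \le x \le h$.
   Context: For a $k[T]/T^m$-module $Q$ generated by at most $h$ elements, write $Q \simeq \bigoplus_{j=1}^h k[T]/T^{a_j}$ with $0 \leq a_j \leq m$; its Hodge polygon $\mathrm{Hdg}(Q)$ is the convex polygon on $[0,h]$ starting at the origin with slopes $\frac{a_1}{m}, \dots, \frac{a_h}{m}$ (each on an interval of length $1$, in increasing order); it lies in $\mathcal{P}_m$, the set of convex polygons on $[0,h]$ starting at the origin with integral breakpoint $x$-coordinates and slopes in $\frac1m\mathbb{Z}\cap[0,1]$. For $P_1 \in \mathcal{P}_{N_1}$ and $P_2 \in \mathcal{P}_{N_2}$, $P_1 \star P_2 \in \mathcal{P}_{N_1+N_2}$ is defined by $(P_1 \star P_2)(x) = \frac{1}{N_1+N_2}(N_1 P_1(x) + N_2 P_2(x))$. *)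

(* Defs.v *)
From HB Require Import structures.
From mathcomp Require Import all_boot all_order all_algebra.
Set Implicit Arguments. Unset Strict Implicit. Unset Printing Implicit Defensive.
Import Order.TTheory GRing.Theory Num.Theory.
Local Open Scope ring_scope.

(* A finite-dimensional k[T]-module is modelled as the row space 'rV[F]_n with
   T acting by right multiplication by a matrix A : 'M[F]_n.  Submodules are
   A-stable subspaces, represented by matrices (row spaces, mxalgebra %MS). *)

Section Defs.
Variables (F : fieldType) (n : nat).

Definition Tpow (A : 'M[F]_n) (l : nat) : 'M[F]_n := iter l (mulmx^~ A) 1%:M.

(* M (= the whole space) is generated, as a k[T]-module, by at most h
   elements: there are h vectors whose k[T]-span (spanned by the T^l g_j,
   l < e suffices since T^e = 0) is everything. *)
Definition gen_by_at_most (A : 'M[F]_n) (e h : nat) : Prop :=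
  exists g : 'I_h -> 'rV[F]_n,
    (\sum_(j < h) \sum_(l < e) <<g j *m Tpow A l>> == 1%:M)%MS.

(* The subquotient V/W (W <= V both T-stable) is isomorphic, as a
   k[T]/T^m-module, to (+)_{j<h} k[T]/T^(a_j) with 0 <= a_j <= m :
   there are v_j in V with T^(a_j) v_j in W (the map is well defined),
   the images span V/W (surjective) and the dimension count matches
   (injective). *)
Definition is_decomp (A : 'M[F]_n) (V W : 'M[F]_n) (m h : nat) (a : seq nat)
  : Prop :=
  [/\ size a = h, all (fun x => x <= m)%N a &
    exists v : 'I_h -> 'rV[F]_n,
      [/\ forall j, (v j <= V)%MS,
          forall j, (v j *m Tpow A (nth 0%N a j) <= W)%MS,
          (V == W + \sum_(j < h) \sum_(l < nth 0%N a j) <<v j *m Tpow A l>>)%MS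
        & \rank V = (\rank W + \sum_(j < h) nth 0%N a j)%N]].
End Defs.

(* The Hodge polygon with slopes a_j/m (sorted increasingly), on [0, size a],
   starting at the origin:  Hdg(x) = sum_j (a_(j)/m) * |[j, j+1] /\ [0, x]|. *)
Definition clamp01 (R : realFieldType) (t : R) : R := Num.min 1 (Num.max 0 t).

Definition hdg (R : realFieldType) (m : nat) (a : seq nat) (x : R) : R :=
  let s := sort leq a in
  \sum_(j < size s) ((nth 0%N s j)%:R / m%:R) * clamp01 (x - j%:R).

Definition pstar (R : realFieldType) (N1 : nat) (P1 : R -> R)
  (N2 : nat) (P2 : R -> R) (x : R) : R :=
  (N1%:R * P1 x + N2%:R * P2 x) / (N1 + N2)%:R.

(* Main.v *)
Require Import Defs.
From HB Require Import structures.
From mathcomp Require Import all_boot all_order all_algebra.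
From mathcomp Require Import zify ring lra.
Import Order.TTheory GRing.Theory Num.Theory.

Set Implicit Arguments. Unset Strict Implicit. Unset Printing Implicit Defensive.
Section LA.
Local Open Scope ring_scope.
Variables (F : fieldType) (n : nat) (A : 'M[F]_n).
Local Notation T := (Tpow A).

Lemma T0 : T 0 = 1%:M. Proof. by []. Qed.
Lemma TS l : T l.+1 = T l *m A. Proof. by []. Qed.
Lemma T1 : T 1 = A. Proof. by rewrite TS T0 mul1mx. Qed.
Lemma TD m l : T (m + l) = T m *m T l.
Proof.
elim: l => [|l IH]; first by rewrite addn0 T0 mulmx1.
by rewrite addnS !TS IH mulmxA.
Qed.

Lemma stableT m (X : 'M[F]_(m, n)) : (X *m A <= X)%MS -> forall l, (X *m T l <= X)%MS.
Proof.
move=> sX; elim=> [|l IH]; first by rewrite T0 mulmx1.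
by rewrite TS mulmxA (submx_trans (submxMr A IH)).
Qed.

Definition K (W : 'M[F]_n) l := kermx (T l *m cokermx W).

Lemma memK (W : 'M[F]_n) m (v : 'M[F]_(m, n)) l : (v <= K W l)%MS = (v *m T l <= W)%MS.
Proof. by rewrite sub_kermx mulmxA submxE. Qed.

Lemma rank_coker m (Y : 'M[F]_(m, n)) (W : 'M[F]_n) :
  (\rank (Y *m cokermx W) + \rank W = \rank (Y + W))%N.
Proof.
rewrite -(mxrank_mul_ker (Y + W)%MS (cokermx W)); congr (_ + _)%N.
  by rewrite (addsmxMr Y W (cokermx W)) mulmx_coker (addsmx0 n (Y *m cokermx W)).
apply/esym/eqmx_rank/andP; split.
  by rewrite submxE -sub_kermx capmxSr.
by rewrite sub_capmx addsmxSr sub_kermx mulmx_coker eqxx.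
Qed.

Lemma rank_capK m (V : 'M[F]_(m, n)) (W : 'M[F]_n) l :
  (\rank (V :&: K W l) + \rank (V *m T l + W) = \rank V + \rank W)%N.
Proof.
rewrite -rank_coker -mulmxA -(mxrank_mul_ker V (T l *m cokermx W)) /K.
lia.
Qed.

Lemma K_mono (W : 'M[F]_n) l : (W *m A <= W)%MS -> (K W l <= K W l.+1)%MS.
Proof.
move=> sW; rewrite memK TS mulmxA; apply: submx_trans (submxMr A _) sW.
by rewrite -memK.
Qed.

Lemma sumsMr_sub (I : finType) (P : pred I) (X : I -> 'M[F]_n) (B : 'M[F]_n) m (Y : 'M[F]_(m, n)) :
  (forall i, P i -> (X i *m B <= Y)%MS) -> ((\sum_(i | P i) X i)%MS *m B <= Y)%MS.
Proof. by move=> H; rewrite sumsmxMr; apply/sumsmx_subP. Qed.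

Lemma genMr_sub m (X : 'M[F]_(m, n)) (B : 'M[F]_n) p (Y : 'M[F]_(p, n)) :
  (X *m B <= Y)%MS -> (<<X>>%MS *m B <= Y)%MS.
Proof. by rewrite (eqmxMr B (genmxE X)). Qed.

Lemma rank_sum_le (I : finType) (P : pred I) (X : I -> 'M[F]_n) :
  (\rank (\sum_(i | P i) X i)%MS <= \sum_(i | P i) \rank (X i))%N.
Proof.
apply: (big_ind2 (fun (M : 'M_n) k => \rank M <= k)%N) => //.
  by rewrite mxrank0.
move=> M1 k1 M2 k2 h1 h2; apply: leq_trans (mxrank_adds_leqif _ _) _.
exact: leq_add.
Qed.

Lemma rank_gen_row (v : 'rV[F]_n) : (\rank <<v>>%MS <= 1)%N.
Proof. by rewrite mxrank_gen rank_leq_row. Qed.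


Lemma addsMr_sub m1 m2 (X : 'M[F]_(m1, n)) (Y : 'M[F]_(m2, n)) (B : 'M[F]_n) p (Z : 'M[F]_(p, n)) :
  (X *m B <= Z)%MS -> (Y *m B <= Z)%MS -> ((X + Y)%MS *m B <= Z)%MS.
Proof. by move=> h1 h2; rewrite (addsmxMr X Y B) addsmx_sub h1 h2. Qed.

Lemma in_dsum h (P : pred 'I_h) (f : 'I_h -> nat) (g : forall j : 'I_h, 'I_(f j) -> 'rV[F]_n) j k :
  P j -> (g j k <= \sum_(j < h | P j) \sum_(k < f j) <<g j k>>)%MS.
Proof.
move=> Pj; apply: (sumsmx_sup j) => //; apply: (sumsmx_sup k) => //.
by rewrite genmxE.
Qed.

Lemma rank_dsum h (P : pred 'I_h) (f : 'I_h -> nat) (g : forall j : 'I_h, 'I_(f j) -> 'rV[F]_n) :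
  (\rank (\sum_(j < h | P j) \sum_(k < f j) <<g j k>>)%MS <= \sum_(j < h | P j) f j)%N.
Proof.
apply: leq_trans (rank_sum_le _ _) _; apply: leq_sum => j _.
apply: leq_trans (rank_sum_le _ _) _.
rewrite -[X in (_ <= X)%N]card_ord -sum1_card; apply: leq_sum => k _.
exact: rank_gen_row.
Qed.

Lemma termU (W Z : 'M[F]_n) l : (W *m A <= W)%MS -> (Z *m A <= Z)%MS -> (W <= Z)%MS ->
  (\rank (Z :&: K W l.+1) + \rank W <= \rank (Z :&: K W l) + \rank (Z :&: K W 1))%N.
Proof.
move=> sW sZ WZ; set X := (Z :&: K W l.+1)%MS.
have := mxrank_mul_ker X (T l *m cokermx W); rewrite -/(K W l).
have E : \rank (X :&: K W l) = \rank (Z :&: K W l).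
  apply/eqmx_rank/andP; split.
    by rewrite sub_capmx (submx_trans (capmxSl _ _) (capmxSl _ _)) capmxSr.
  rewrite sub_capmx capmxSr andbT sub_capmx capmxSl /=.
  exact: submx_trans (capmxSr _ _) (K_mono _ sW).
have H : (X *m T l <= Z :&: K W 1)%MS.
  rewrite sub_capmx; apply/andP; split.
    exact: submx_trans (submxMr _ (capmxSl _ _)) (stableT sZ l).
  by rewrite memK -mulmxA -TD addn1 -memK capmxSr.
have H2 : (W <= Z :&: K W 1)%MS by rewrite sub_capmx WZ memK T1.
have H3 := rank_coker (Z :&: K W 1)%MS W.
rewrite ((addsmx_idPl H2 : (_ :=: _)%MS).1) in H3.
have H4 : (\rank (X *m (T l *m cokermx W)) <= \rank ((Z :&: K W 1)%MS *m cokermx W))%N.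
  by rewrite mulmxA; apply/mxrankS/submxMr.
rewrite E; lia.
Qed.

Lemma monoK (V Z W : 'M[F]_n) l : (W *m A <= W)%MS -> (Z <= V)%MS ->
  (\rank (Z :&: K W l.+1) + \rank (V :&: K W l) <= \rank (Z :&: K W l) + \rank (V :&: K W l.+1))%N.
Proof.
move=> sW ZV.
have := mxrank_sum_cap (Z :&: K W l.+1)%MS (V :&: K W l)%MS.
have H1 : (\rank (Z :&: K W l.+1 + V :&: K W l)%MS <= \rank (V :&: K W l.+1))%N.
  apply: mxrankS; rewrite addsmx_sub capmxS //= capmxS //; exact: K_mono.
have H2 : (\rank (Z :&: K W l.+1 :&: (V :&: K W l))%MS <= \rank (Z :&: K W l))%N.
  apply: mxrankS; rewrite sub_capmx (submx_trans (capmxSl _ _) (capmxSl _ _)) /=.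
  exact: (submx_trans (capmxSr _ _) (capmxSr _ _)).
lia.
Qed.

Lemma tele (Z W : 'M[F]_n) L (f : nat -> nat) : (Z <= K W L)%MS ->
  (forall l, (l < L)%N -> (\rank (Z :&: K W l.+1) <= \rank (Z :&: K W l) + f l)%N) ->
  (\rank Z <= \rank W + \sum_(l < L) f l)%N.
Proof.
move=> ZK Hf.
have H0 : (\rank (Z :&: K W 0) <= \rank W)%N.
  apply: mxrankS; apply: submx_trans (capmxSr _ _) _.
  by have := submx_refl (K W 0); rewrite {1}memK T0 mulmx1.
have HL : forall L', (L' <= L)%N -> (\rank (Z :&: K W L') <= \rank W + \sum_(0 <= l < L') f l)%N.
  elim=> [|L' IH] HL'; first by rewrite big_geq // addn0.
  rewrite big_nat_recr //=; have := Hf L' HL'; have := IH (ltnW HL'); lia.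
rewrite -(big_mkord xpredT f).
apply: leq_trans (HL L (leqnn L)); apply: mxrankS.
by rewrite sub_capmx submx_refl ZK.
Qed.


Lemma decomp_rank (V W : 'M[F]_n) m h (a : seq nat) l : (W *m A <= W)%MS ->
  is_decomp A V W m h a ->
  (\rank (V :&: K W l) + \sum_(j < h) (nth 0%N a j - l) = \rank V)%N.
Proof.
move=> sW [_ _ [v [vV vW /andP[VWC WCV] rV]]].
set C := (\sum_(j < h) \sum_(k < nth 0%N a j) <<v j *m T k>>)%MS in VWC WCV.
set D := (\sum_(j < h) \sum_(k < nth 0%N a j - l) <<v j *m T (k + l)>>)%MS.
set E := (\sum_(j < h) \sum_(k < minn l (nth 0%N a j)) <<v j *m T k>>)%MS.
have eq1 : \rank (V *m T l + W)%MS = \rank (W + D)%MS.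
  apply/eqmx_rank/andP; split.
    rewrite addsmx_sub addsmxSl andbT.
    apply: submx_trans (submxMr _ VWC) _.
    apply: addsMr_sub; first exact: submx_trans (stableT sW l) (addsmxSl _ _).
    apply: sumsMr_sub => j _; apply: sumsMr_sub => k _; apply: genMr_sub.
    rewrite -mulmxA -TD.
    case: (ltnP (k + l) (nth 0%N a j)) => hk.
      have hk' : (k < nth 0%N a j - l)%N by lia.
      apply: submx_trans (addsmxSr _ _).
      exact: (in_dsum (P := xpredT) (fun j (k : 'I_(nth 0%N a j - l)) => v j *m T (k + l)) (Ordinal hk') isT).
    have -> : (k + l = nth 0%N a j + (k + l - nth 0%N a j))%N by lia.
    rewrite TD mulmxA; apply: submx_trans (addsmxSl _ _).
    exact: submx_trans (submxMr _ (vW j)) (stableT sW _).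
  rewrite addsmx_sub addsmxSr /=.
  apply/sumsmx_subP => j _; apply/sumsmx_subP => k _; rewrite genmxE TD mulmxA.
  apply: submx_trans (addsmxSl _ _); apply: submxMr.
  have hk : (k < nth 0%N a j)%N by have := ltn_ord k; lia.
  apply: submx_trans WCV; apply: submx_trans (addsmxSr _ _).
  exact: (in_dsum (P := xpredT) (fun j (k : 'I_(nth 0%N a j)) => v j *m T k) (Ordinal hk) isT).
have eq2 : (\rank (W + D)%MS <= \rank W + \sum_(j < h) (nth 0%N a j - l))%N.
  apply: leq_trans (mxrank_adds_leqif _ _) _; rewrite leq_add2l.
  exact: (rank_dsum xpredT (fun j (k : 'I_(nth 0%N a j - l)) => v j *m T (k + l))).
have eq3 : (\rank V <= \rank (W + D)%MS + \sum_(j < h) minn l (nth 0%N a j))%N.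
  apply: leq_trans (_ : \rank (W + D + E)%MS <= _)%N.
    apply: mxrankS; apply: submx_trans VWC _.
    rewrite addsmx_sub (submx_trans (addsmxSl W D) (addsmxSl _ _)) /=.
    apply/sumsmx_subP => j _; apply/sumsmx_subP => k _; rewrite genmxE.
    case: (ltnP k l) => hk.
      have hk' : (k < minn l (nth 0%N a j))%N by have := ltn_ord k; lia.
      apply: submx_trans (addsmxSr _ _).
      exact: (in_dsum (P := xpredT) (fun j (k : 'I_(minn l (nth 0%N a j))) => v j *m T k) (Ordinal hk') isT).
    have hk' : (k - l < nth 0%N a j - l)%N by have := ltn_ord k; lia.
    apply: submx_trans (addsmxSl _ _); apply: submx_trans (addsmxSr _ _).
    have := (in_dsum (P := xpredT) (fun j (k : 'I_(nth 0%N a j - l)) => v j *m T (k + l)) (Ordinal hk') isT).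
    by rewrite /= subnK.
  apply: leq_trans (mxrank_adds_leqif _ _) _; rewrite leq_add2l.
  exact: (rank_dsum xpredT (fun j (k : 'I_(minn l (nth 0%N a j))) => v j *m T k)).
have eq4 : (\sum_(j < h) nth 0%N a j = \sum_(j < h) minn l (nth 0%N a j) + \sum_(j < h) (nth 0%N a j - l))%N.
  rewrite -big_split /=; apply: eq_bigr => j _; lia.
have := rank_capK V W l; rewrite eq1; lia.
Qed.


Lemma sum_diff h (f : 'I_h -> nat) l :
  (\sum_(j < h) (f j - l) = \sum_(j < h) (f j - l.+1) + \sum_(j < h) nat_of_bool (l < f j))%N.
Proof. rewrite -big_split /=; apply: eq_bigr => j _; case: ltnP => /= H; lia. Qed.

Lemma LA_main e h i (U : 'M[F]_n) (a b c : seq nat) (P : pred 'I_h) :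
  T e = 0 -> (U *m A <= U)%MS ->
  is_decomp A 1%:M 0 e h a -> is_decomp A U 0 i h b -> is_decomp A 1%:M U (e - i) h c ->
  (\sum_(j < h | P j) nth 0%N a j <=
     \sum_(l < e) minn (\sum_(j < h | P j) 1) (\sum_(j < h) nat_of_bool (l < nth 0%N b j))
   + \sum_(l < e) minn (\sum_(j < h | P j) 1) (\sum_(j < h) nat_of_bool (l < nth 0%N c j)))%N.
Proof.
move=> Te sU Ha Hb Hc.
have Ha' := Ha; case: Ha' => _ _ [v [_ vW /andP[VC _] rV]].
set C := (\sum_(j < h) \sum_(k < nth 0%N a j) <<v j *m T k>>)%MS in VC.
set S := (\sum_(j < h | P j) \sum_(k < nth 0%N a j) <<v j *m T k>>)%MS.
set G := (\sum_(j < h | P j) <<v j>>)%MS.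
set r := (\sum_(j < h | P j) 1)%N.
have S1 : (S <= S *m A + G)%MS.
  apply/sumsmx_subP => j Pj; apply/sumsmx_subP => k _; rewrite genmxE.
  case: k => [[|k] hk] /=.
    rewrite mulmx1; apply: submx_trans (addsmxSr _ _).
    by apply: (sumsmx_sup j) => //; rewrite genmxE.
  rewrite mulmxA; apply: submx_trans (addsmxSl _ _); apply: submxMr.
  have hk' : (k < nth 0%N a j)%N by lia.
  exact: (in_dsum (fun j (k : 'I_(nth 0%N a j)) => v j *m T k) (Ordinal hk') Pj).
have S2 : (S *m A <= S)%MS.
  apply: sumsMr_sub => j Pj; apply: sumsMr_sub => k _; apply: genMr_sub.
  rewrite -mulmxA -TS.
  case: (ltnP k.+1 (nth 0%N a j)) => hk.
    exact: (in_dsum (fun j (k : 'I_(nth 0%N a j)) => v j *m T k) (Ordinal hk) Pj).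
  have -> : k.+1 = nth 0%N a j by have := ltn_ord k; lia.
  exact: submx_trans (vW j) (sub0mx _ _).
have S3 : (\sum_(j < h | P j) nth 0%N a j <= \rank S)%N.
  have rn : n = (\sum_(j < h) nth 0%N a j)%N by move: rV; rewrite mxrank1 mxrank0.
  have Hsplit : (\sum_(j < h) nth 0%N a j = \sum_(j < h | P j) nth 0%N a j + \sum_(j < h | ~~ P j) nth 0%N a j)%N.
    by rewrite [LHS](bigID P).
  have H1 : (n <= \rank S + \sum_(j < h | ~~ P j) nth 0%N a j)%N.
    rewrite -{1}(mxrank1 F n).
    apply: leq_trans (_ : \rank (S + \sum_(j < h | ~~ P j) \sum_(k < nth 0%N a j) <<v j *m T k>>)%MS <= _)%N.
      apply: mxrankS; apply: submx_trans VC _; rewrite addsmx_sub sub0mx /=.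
      apply/sumsmx_subP => j _; apply/sumsmx_subP => k _; rewrite genmxE.
      case Pj: (P j).
        exact: submx_trans (in_dsum (fun j (k : 'I_(nth 0%N a j)) => v j *m T k) k Pj) (addsmxSl _ _).
      apply: submx_trans (addsmxSr _ _).
      by apply: (in_dsum (P := fun j => ~~ P j) (fun j (k : 'I_(nth 0%N a j)) => v j *m T k) k); rewrite Pj.
    apply: leq_trans (mxrank_adds_leqif _ _) _; rewrite leq_add2l.
    exact: (rank_dsum (fun j => ~~ P j) (fun j (k : 'I_(nth 0%N a j)) => v j *m T k)).
  lia.
have S4 : (\rank G <= r)%N.
  apply: leq_trans (rank_sum_le _ _) _; apply: leq_sum => j _; exact: rank_gen_row.
have rSA : (\rank S <= \rank (S *m A) + r)%N.
  apply: leq_trans (mxrankS S1) _; apply: leq_trans (mxrank_adds_leqif _ _) _.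
  by rewrite leq_add2l.
have s0 : ((0 : 'M[F]_n) *m A <= (0 : 'M[F]_n))%MS by rewrite mul0mx sub0mx.
set Z := (S :&: U)%MS.
have sZ : (Z *m A <= Z)%MS.
  rewrite sub_capmx; apply/andP; split.
    exact: submx_trans (submxMr _ (capmxSl _ _)) S2.
  exact: submx_trans (submxMr _ (capmxSr _ _)) sU.
have rZ1 : (\rank (Z :&: K 0 1) <= r)%N.
  apply: leq_trans (_ : \rank (S :&: K 0 1) <= _)%N.
    by apply: mxrankS; rewrite capmxS // capmxSl.
  have := rank_capK S 0 1; rewrite T1 (addsmx0 n (S *m A)) mxrank0; lia.
have NZ : (\rank Z <= \rank (0%R : 'M[F]_n) + \sum_(l < e) minn r (\sum_(j < h) nat_of_bool (l < nth 0%N b j)))%N.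
  apply: (tele (f := fun l => minn r (\sum_(j < h) nat_of_bool (l < nth 0%N b j)))).
    by rewrite memK Te mulmx0 sub0mx.
  move=> l _.
  have := termU l s0 sZ (sub0mx _ _).
  have := monoK l s0 (capmxSr S U).
  have := decomp_rank l s0 Hb; have := decomp_rank l.+1 s0 Hb.
  have := sum_diff (fun j : 'I_h => nth 0%N b j) l.
  rewrite mxrank0 -/Z; lia.
set Z' := (S + U)%MS.
have sZ' : (Z' *m A <= Z')%MS.
  apply: addsMr_sub.
    exact: submx_trans S2 (addsmxSl _ _).
  exact: submx_trans sU (addsmxSr _ _).
have rZ'1 : (\rank (Z' :&: K U 1) <= \rank U + r)%N.
  have := rank_capK Z' U 1; rewrite T1.
  have : (\rank Z' <= \rank (Z' *m A + U)%MS + r)%N.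
    apply: leq_trans (_ : \rank ((Z' *m A + U) + G)%MS <= _)%N.
      apply: mxrankS; rewrite addsmx_sub; apply/andP; split.
        apply: submx_trans S1 _; apply: addsmxS => //.
        exact: submx_trans (submxMr _ (addsmxSl _ _)) (addsmxSl _ _).
      exact: submx_trans (addsmxSr _ _) (addsmxSl _ _).
    apply: leq_trans (mxrank_adds_leqif _ _) _; rewrite leq_add2l //.
  lia.
have QZ : (\rank Z' <= \rank U + \sum_(l < e) minn r (\sum_(j < h) nat_of_bool (l < nth 0%N c j)))%N.
  apply: (tele (f := fun l => minn r (\sum_(j < h) nat_of_bool (l < nth 0%N c j)))).
    by rewrite memK Te mulmx0 sub0mx.
  move=> l _.
  have := termU l sU sZ' (addsmxSr _ _).
  have := monoK l sU (submx1 Z').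
  have := decomp_rank l sU Hc; have := decomp_rank l.+1 sU Hc.
  have := sum_diff (fun j : 'I_h => nth 0%N c j) l.
  lia.
have := mxrank_sum_cap S U.
rewrite mxrank0 in NZ; move: NZ QZ; rewrite /Z /Z'; lia.
Qed.

End LA.

Section Comb.
Lemma sum_ltn_ord L x : \sum_(l < L) nat_of_bool (l < x) = minn x L.
Proof.
elim: L => [|L IH]; first by rewrite big_ord0; lia.
rewrite big_ord_recr /= IH; case: ltnP => /= H; lia.
Qed.

Lemma sum_count_le L (u : seq nat) : all (fun x => x <= L) u ->
  \sum_(l < L) count (fun x => l < x) u = sumn u.
Proof.
elim: u => [|x u IH] /=; first by rewrite big1.
move=> /andP[xL uL]; rewrite big_split /= IH // sum_ltn_ord; lia.
Qed.

Lemma C1 (s : seq nat) L r : all (fun x => x <= L) s -> r <= size s ->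
  \sum_(l < L) minn r (count (fun x => l < x) s) = sumn (drop (size s - r) (sort leq s)).
Proof.
move=> sL rs; set t := sort leq s; set k := size s - r.
have pt : perm_eq t s by rewrite /t perm_sort.
have st : size t = size s by rewrite /t size_sort.
have srt : sorted leq t by rewrite /t sort_sorted //; exact: leq_total.
have tL : all (fun x => x <= L) (drop k t).
  apply/allP => x /mem_drop xin; move/allP: sL; apply; by rewrite -(perm_mem pt).
rewrite -(sum_count_le tL); apply: eq_bigr => l _.
rewrite -(permP pt) -{1}(cat_take_drop k t) count_cat.
have sd : size (drop k t) = r by rewrite size_drop st /k; lia.
case: (boolP (has (fun x => l < x) (take k t))) => [/hasP[y yin ly] | hn].
  have : all (fun x => l < x) (drop k t).
    move: srt; rewrite (sorted_pairwise leq_trans) -{1}(cat_take_drop k t) pairwise_cat.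
    case/and3P => /allrelP Hr _ _; apply/allP => z zin.
    exact: leq_trans ly (Hr y z yin zin).
  rewrite all_count => /eqP ->; rewrite sd; lia.
move: hn; rewrite has_count -leqNgt leqn0 => /eqP ->.
have := count_size (fun x => l < x) (drop k t); rewrite sd add0n => H; by apply/minn_idPr.
Qed.

Lemma sum_in_seq h (D : seq nat) (F : nat -> nat) : uniq D -> all (fun i => i < h) D ->
  \sum_(j < h | val j \in D) F j = \sum_(i <- D) F i.
Proof.
move=> uD Dh.
rewrite -(big_mkord (fun j => j \in D)) -big_filter.
apply: perm_big; apply: uniq_perm; first by rewrite filter_uniq // iota_uniq.
  exact: uD.
move=> i; rewrite mem_filter mem_iota /= add0n.
case iD: (i \in D) => //=; rewrite subn0; move/allP: Dh => /(_ i iD) -> //.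
Qed.

Lemma C2 (s : seq nat) r : r <= size s ->
  exists P : pred 'I_(size s),
    \sum_(j < size s | P j) 1 = r /\
    \sum_(j < size s | P j) nth 0 s j = sumn (drop (size s - r) (sort leq s)).
Proof.
move=> rs.
have : perm_eq (sort leq s) s by rewrite perm_sort.
case/(perm_iotaP 0) => Is pIs sE.
set D := drop (size s - r) Is.
have uD : uniq D by rewrite drop_uniq // (perm_uniq pIs) iota_uniq.
have Dh : all (fun i => i < size s) D.
  by apply/allP => i /mem_drop; rewrite (perm_mem pIs) mem_iota add0n => /andP[].
exists (fun j : 'I_(size s) => val j \in D); split.
  rewrite (sum_in_seq (fun _ => 1) uD Dh) sum1_size size_drop (perm_size pIs) size_iota; exact: subKn.
rewrite (sum_in_seq (fun j => nth 0 s j) uD Dh) sE -map_drop sumnE big_map //.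
Qed.

Lemma sum_nth_seq h (s : seq nat) (F : nat -> nat) : size s = h ->
  \sum_(j < h) F (nth 0 s j) = \sum_(x <- s) F x.
Proof. by move=> <-; rewrite (big_nth 0) big_mkord. Qed.

Lemma count_nth h (s : seq nat) l : size s = h ->
  \sum_(j < h) nat_of_bool (l < nth 0 s j) = count (fun x => l < x) s.
Proof.
move=> sh; rewrite (sum_nth_seq (fun x => nat_of_bool (l < x)) sh).
by rewrite -sumn_count sumnE big_map.
Qed.

End Comb.

Section FinA.
Local Open Scope ring_scope.
Local Open Scope nat_scope.
Lemma C2h (s : seq nat) h r : size s = h -> r <= h ->
  exists P : pred 'I_h,
    \sum_(j < h | P j) 1 = r /\
    \sum_(j < h | P j) nth 0 s j = sumn (drop (h - r) (sort leq s)).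
Proof. by move=> <-; exact: C2. Qed.

Lemma sum_take (t : seq nat) k : k <= size t ->
  \sum_(0 <= j < k) nth 0 t j = sumn (take k t).
Proof.
move=> kt; rewrite sumnE [RHS](big_nth 0) size_take.
have -> : (if k < size t then k else size t) = k by case: ltnP => //; lia.
by apply: eq_big_nat => j /andP[_ jk]; rewrite nth_take.
Qed.

Lemma int_ineq (F : fieldType) n (A : 'M[F]_n) e h i (U : 'M[F]_n) (a b c : seq nat) k :
  Tpow A e = 0%R -> (U *m A <= U)%MS -> (i <= e) ->
  is_decomp A 1%:M 0%R e h a -> is_decomp A U 0%R i h b -> is_decomp A 1%:M U (e - i) h c ->
  k <= h ->
  sumn (take k (sort leq b)) + sumn (take k (sort leq c)) <= sumn (take k (sort leq a)).
Proof.
move=> Te sU ie Ha Hb Hc kh.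
have Ha' := Ha; have Hb' := Hb; have Hc' := Hc.
case: Ha' => sa alla [va [_ _ _ ra]].
case: Hb' => sb allb [vb [_ _ _ rb]].
case: Hc' => sc allc [vc [_ _ _ rc]].
rewrite mxrank1 mxrank0 add0n (sum_nth_seq id sa) -sumnE in ra.
rewrite mxrank0 add0n (sum_nth_seq id sb) -sumnE in rb.
rewrite mxrank1 (sum_nth_seq id sc) -sumnE in rc.
have [P [P1 Pa]] := C2h sa (leq_subr k h).
have := LA_main P Te sU Ha Hb Hc.
rewrite P1 Pa.
have -> : h - (h - k) = k by lia.
under eq_bigr => l _ do rewrite (count_nth l sb).
under [X in _ <= _ + X]eq_bigr => l _ do rewrite (count_nth l sc).
have allb' : all (fun x => x <= e) b.
  by apply/allP => x xb; move/allP: allb => /(_ x xb) /= xi; lia.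
have allc' : all (fun x => x <= e) c.
  by apply/allP => x xc; move/allP: allc => /(_ x xc) /= xi; lia.
have hb : h - k <= size b by rewrite sb leq_subr.
have hc : h - k <= size c by rewrite sc leq_subr.
have Cb := C1 allb' hb. have Cc := C1 allc' hc.
rewrite sb in Cb; rewrite sc in Cc; rewrite Cb Cc.
have -> : h - (h - k) = k by lia.
have pa : perm_eq (sort leq a) a by rewrite perm_sort.
have pb : perm_eq (sort leq b) b by rewrite perm_sort.
have pc : perm_eq (sort leq c) c by rewrite perm_sort.
have Ea := perm_sumn pa; have Eb := perm_sumn pb; have Ec := perm_sumn pc.
rewrite -(cat_take_drop k (sort leq a)) sumn_cat in Ea.
rewrite -(cat_take_drop k (sort leq b)) sumn_cat in Eb.
rewrite -(cat_take_drop k (sort leq c)) sumn_cat in Ec.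
lia.
Qed.

End FinA.

Section FinB.
Local Open Scope ring_scope.


Lemma abel (R : realFieldType) (d w : nat -> R) h :
  (forall k, (k <= h)%N -> 0 <= \sum_(0 <= j < k) d j) ->
  (forall j, w j.+1 <= w j) -> 0 <= w h ->
  0 <= \sum_(0 <= j < h) d j * w j.
Proof.
move=> Hd Hw Hh.
have E : forall m, \sum_(0 <= j < m) d j * w j =
   \sum_(0 <= k < m) (\sum_(0 <= j < k.+1) d j) * (w k - w k.+1) + (\sum_(0 <= j < m) d j) * w m.
  elim=> [|m IH]; first by rewrite !big_geq // mul0r addr0.
  rewrite big_nat_recr //= IH [in RHS]big_nat_recr //= [in RHS]big_nat_recr //=.
  ring.
rewrite E; apply: addr_ge0; last by apply: mulr_ge0 => //; exact: Hd.
rewrite big_seq; apply: sumr_ge0 => k; rewrite mem_iota => /andP[_ kh]; apply: mulr_ge0.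
  by apply: Hd; move: kh; rewrite add0n subn0.
by rewrite subr_ge0.
Qed.

Lemma mul_div_nat (R : realFieldType) (t m : nat) : (t <= m)%N ->
  m%:R * (t%:R / m%:R) = t%:R :> R.
Proof.
move=> tm; have [m0|m0] := eqVneq m 0%N.
  by move: tm; rewrite m0 leqn0 => /eqP ->; rewrite !mul0r.
by rewrite mulrCA divff ?mulr1 // pnatr_eq0.
Qed.

Lemma hdg_expand (R : realFieldType) (m h : nat) (s : seq nat) (x : R) :
  size s = h -> all (fun y => y <= m)%N s ->
  m%:R * hdg m s x = \sum_(0 <= j < h) (nth 0%N (sort leq s) j)%:R * clamp01 (x - j%:R).
Proof.
move=> sh sm; rewrite /hdg /= mulr_sumr size_sort sh big_mkord.
apply: eq_bigr => j _; rewrite mulrA mul_div_nat //.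
have [jl|jg] := ltnP j (size (sort leq s)).
  have : nth 0%N (sort leq s) j \in sort leq s by rewrite mem_nth.
  by rewrite mem_sort => /(allP sm).
by rewrite nth_default.
Qed.

Lemma clamp_mono (R : realFieldType) (y z : R) : y <= z -> clamp01 y <= clamp01 z.
Proof. by move=> H; rewrite /clamp01 le_min2 // le_max2. Qed.

Lemma clamp_ge0 (R : realFieldType) (y : R) : 0 <= clamp01 y.
Proof. by rewrite /clamp01 le_min ler01 le_max lexx. Qed.

End FinB.

Unset Implicit Arguments.
Local Open Scope ring_scope.

Theorem mainTheorem6 (F : fieldType) (R : realFieldType) (e h i n : nat)
  (A U : 'M[F]_n) (a b c : seq nat) :
  (1 <= e)%N -> (1 <= h)%N -> (1 <= i)%N -> (i <= e)%N ->
  Tpow A e = 0 ->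
  gen_by_at_most A e h ->
  (U *m A <= U)%MS ->
  U *m Tpow A i = 0 ->
  (Tpow A (e - i) <= U)%MS ->
  is_decomp A 1%:M 0 e h a ->
  is_decomp A U 0 i h b ->
  is_decomp A 1%:M U (e - i) h c ->
  forall x : R, 0 <= x -> x <= h%:R ->
    pstar i (hdg i b) (e - i) (hdg (e - i) c) x <= hdg e a x.
Proof.
move=> e1 h1 i1 ie Te _ sU _ _ Ha Hb Hc x _ _.
have Ha' := Ha; have Hb' := Hb; have Hc' := Hc.
case: Ha' => sa alla _; case: Hb' => sb allb _; case: Hc' => sc allc _.
rewrite /pstar.
have -> : (i + (e - i))%N = e by lia.
rewrite (hdg_expand x sb allb) (hdg_expand x sc allc).
have e0 : 0 < e%:R :> R by rewrite ltr0n.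
rewrite ler_pdivrMr // mulrC (hdg_expand x sa alla) -subr_ge0.
set w := fun j : nat => clamp01 (x - j%:R).
set d := fun j : nat => ((nth 0%N (sort leq a) j)%:R - (nth 0%N (sort leq b) j)%:R
                          - (nth 0%N (sort leq c) j)%:R : R).
have -> : \sum_(0 <= j < h) (nth 0%N (sort leq a) j)%:R * clamp01 (x - j%:R) -
   (\sum_(0 <= j < h) (nth 0%N (sort leq b) j)%:R * clamp01 (x - j%:R) +
    \sum_(0 <= j < h) (nth 0%N (sort leq c) j)%:R * clamp01 (x - j%:R)) =
   \sum_(0 <= j < h) d j * w j.
  rewrite opprD addrA -!sumrB; apply: eq_bigr => j _; rewrite /d /w; ring.
apply: abel.
- move=> k kh; rewrite /d !sumrB -!natr_sum !sum_take ?size_sort ?sa ?sb ?sc //.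
  rewrite -addrA -opprD subr_ge0 -natrD ler_nat.
  exact: (int_ineq Te sU ie Ha Hb Hc kh).
- move=> j; apply: clamp_mono; rewrite -[j.+1]addn1 natrD; lra.
- exact: clamp_ge0.
Qed.
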